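(* Let $(t_j^i)_{0\le j\le i}$ be real numbers and let $h_{j,k}^i$ ($0\le k\le i$, $0\le j\le i-k$) be defined by $h_{j,0}^i=t_j^i$ and $h_{j,k}^i=h_{j,k-1}^{i-1}+h_{j,k-1}^{i}+h_{j+1,k-1}^{i}$ for $k\ge 1$. Then for any $0\leq k \leq i$, $0\leq j \leq i-k$, $$h^i_{j,k}=\sum_{r=0}^{k} \sum_{s=0}^{r} \binom{k}{s,\,k-r,\,r-s} t_{j+s}^{i-k+r}.$$
   Context: For non-negative integers $p,q,r$ with $p+q+r=n$, the tetrahedron trinomial coefficient is $\binom{n}{p,q,r}=\frac{n!}{p!\,q!\,r!}$. The numbers $t_j^i$ ($i,j\in\mathbb N$, $0\le j\le i$) form an arithmetical triangle $\mathcal T$ (rows $i$, columns $j$), and the $h_{j,k}^i$ form a tetrahedron $\mathcal H$ with face $\mathcal T$. *)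

(* Defs.v *)
From mathcomp Require Import all_boot all_order all_algebra.
Set Implicit Arguments. Unset Strict Implicit. Unset Printing Implicit Defensive.
Import Order.TTheory GRing.Theory Num.Theory.
Local Open Scope ring_scope.

Definition trinom (R : realFieldType) (n p q r : nat) : R :=
  (n`!)%:R / ((p`!)%:R * (q`!)%:R * (r`!)%:R).

(* t i j stands for t_j^i ; h t i j k stands for h_{j,k}^i.
   h_{j,0}^i = t_j^i ,  h_{j,k}^i = h_{j,k-1}^{i-1} + h_{j,k-1}^i + h_{j+1,k-1}^i. *)
Fixpoint h (R : realFieldType) (t : nat -> nat -> R) (i j k : nat) : R :=
  match k with
  | 0 => t i j
  | k'.+1 => h t i.-1 j k' + h t i j k' + h t i j.+1 k'
  end.

(* Main.v *)
Require Import Defs.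
From mathcomp Require Import all_boot all_order all_algebra.
From mathcomp Require Import zify ring.
Import Order.TTheory GRing.Theory Num.Theory.
Local Open Scope ring_scope.
Set Implicit Arguments.

Definition Ssum (R : realFieldType) (t : nat -> nat -> R) (k i j : nat) : R :=
  \sum_(0 <= r < k.+1) \sum_(0 <= s < r.+1)
     ('C(k, r) * 'C(r, s))%:R * t (i - k + r)%N (j + s)%N.

Arguments Ssum {R}.

Lemma trinomE (R : realFieldType) k r s : (s <= r)%N -> (r <= k)%N ->
  trinom R k s (k - r) (r - s) = ('C(k, r) * 'C(r, s))%:R.
Proof.
move=> sr rk; rewrite /trinom.
have e1 := bin_fact rk; have e2 := bin_fact sr.
rewrite -e1 -{1}e2 !natrM.
have nz : forall n, (n`!)%:R != 0 :> R by move=> n; rewrite pnatr_eq0 -lt0n fact_gt0.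
by field; rewrite ?nz.
Qed.

Lemma Srec (R : realFieldType) (t : nat -> nat -> R) k i j : (k < i)%N ->
  Ssum t k.+1 i j = Ssum t k i.-1 j + Ssum t k i j + Ssum t k i j.+1.
Proof.
move=> ki; rewrite /Ssum.
have P : forall r s, ('C(k.+1, r) * 'C(r, s))%:R =
   ('C(k, r) * 'C(r, s))%:R + ((0 < r)%N * ('C(k, r.-1) * 'C(r.-1, s)))%:R
   + ((0 < r)%N * (0 < s)%N * ('C(k, r.-1) * 'C(r.-1, s.-1)))%:R :> R.
  move=> [|r] [|s] /=; rewrite ?binS ?bin0 ?mul0n ?mul1n ?addn0 ?muln1 ?add0n //;
  rewrite -!natrD; congr _%:R; rewrite ?binS; lia.
under eq_bigr do under eq_bigr do rewrite P !mulrDl.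
under eq_bigr do rewrite !big_split /=.
rewrite !big_split /=.
congr (_ + _ + _).
idtac.
- rewrite big_nat_recr //= [X in _ + X]big1 ?addr0; last first.
    by move=> s _; rewrite bin_small // mul0n mul0r.
  apply: eq_bigr => r _; apply: eq_bigr => s _.
  congr (_ * t _ _); lia.
- rewrite big_nat_recl //= [X in X + _]big1 ?add0r; last first.
    by move=> s _; rewrite mul0n mul0r.
  apply: eq_bigr => r _; rewrite big_nat_recr //= (bin_small (ltnSn r)) ?muln0 ?mul1n ?mul0r ?addr0.
  apply: eq_bigr => s _; rewrite mul1n; congr (_ * t _ _); lia.
- rewrite big_nat_recl //= [X in X + _]big1 ?add0r; last first.
    by move=> s _; rewrite mul0n mul0r.
  apply: eq_bigr => r _; rewrite big_nat_recl //= muln0 mul0n mul0r add0r.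
  apply: eq_bigr => s _; rewrite !mul1n; congr (_ * t _ _); lia.
Qed.

Lemma hS (R : realFieldType) (t : nat -> nat -> R) k : forall i j, (k <= i)%N ->
  h t i j k = Ssum t k i j.
Proof.
elim: k => [|k IH] i j ki.
  by rewrite /Ssum big_nat1 big_nat1 bin0 subn0 addn0 addn0 mul1r.
rewrite Srec // /= !IH //; lia.
Qed.

Theorem theorem1 (R : realFieldType) (t : nat -> nat -> R) (i j k : nat) :
  (k <= i)%N -> (j <= i - k)%N ->
  h t i j k =
  \sum_(0 <= r < k.+1) \sum_(0 <= s < r.+1)
     trinom R k s (k - r) (r - s) * t (i - k + r)%N (j + s)%N.
Proof.
move=> ki _; rewrite hS // /Ssum.
apply: eq_big_nat => r /andP[_ rk]; apply: eq_big_nat => s /andP[_ sr].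
by rewrite trinomE.
Qed.
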